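(* Let $a:\mathbb{R}\to\mathbb{R}$ be such that (C1) $a$ is continuous, and (C2) for every $T\in\mathbb{R}^+$ there exists $\varepsilon_T>0$ with $a(s)\ge\varepsilon_T$ for all $s\le T$. Define $Y_N(t)=\int_{-\infty}^{Nt}\exp\!\big(-\int_u^{Nt}a(\tfrac{s}{N})\,ds\big)\,L(du)$, $t\in\mathbb{R}$, $N\in\mathbb{N}$. Then $\{Y_N(t)\}_{N\in\mathbb{N}}$ is locally stationary with kernels $g_N^0(Nt,v)=\mathbb{1}_{\{v\ge0\}}\exp\!\big(-\int_{-v}^0 a(\tfrac{s}{N}+t)ds\big)$, limiting kernel $g(t,u)=\mathbb{1}_{\{u\ge0\}}e^{-a(t)u}$ and limiting transfer function $A(t,\mu)=\int_{\mathbb{R}}e^{-i\mu u}\mathbb{1}_{\{u\ge0\}}e^{-a(t)u}\,du$.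
   Context: $L$ is a two-sided real Lévy process ($L(t)=L_1(t)\mathbb{1}_{\{t\ge0\}}-L_2(-t)\mathbb{1}_{\{t<0\}}$, $L_1,L_2$ independent copies of a Lévy process) with $E[L(1)]=0$ and $E[L(1)^2]<\infty$; integrals are $L^2$-integrals. A sequence $\{Y_N(t),t\in\mathbb{R}\}_{N\in\mathbb{N}}$ is locally stationary if $Y_N(t)=\int_{\mathbb{R}}g_N^0(Nt,Nt-u)L(du)$ for all $t,N$, where $g_N^0:\mathbb{R}^2\to\mathbb{R}$, $g_N^0(Nt,\cdot)\in L^2(\mathbb{R})$, and there is $g:\mathbb{R}^2\to\mathbb{R}$ such that $t\mapsto g(t,\cdot)$ is continuous into $L^2(\mathbb{R})$ and $g_N^0(Nt,\cdot)\to g(t,\cdot)$ in $L^2(\mathbb{R})$ for every $t$; equivalently in the frequency domain with transfer functions given by the Fourier transforms $A_N^0(Nt,\mu)=\int e^{-i\mu u}g_N^0(Nt,u)du$, $A(t,\mu)=\int e^{-i\mu u}g(t,u)du$. *)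

(* Defs.v *)
From HB Require Import structures.
From mathcomp Require Import all_boot all_order all_algebra.
From mathcomp Require Import all_classical all_reals all_analysis.
Set Implicit Arguments. Unset Strict Implicit. Unset Printing Implicit Defensive.
Import Order.TTheory GRing.Theory Num.Theory.
Import numFieldNormedType.Exports.
Local Open Scope classical_set_scope.
Local Open Scope ring_scope.

Notation leb R := (@lebesgue_measure R).

Definition in_L2 (R : realType) (f : R -> R) : Prop :=
  measurable_fun setT f /\
  (\int[leb R]_x ((f x ^+ 2)%:E) < +oo)%E.

Definition L2dist2 (R : realType) (f h : R -> R) : \bar R :=
  (\int[leb R]_x (((f x - h x) ^+ 2)%:E))%E.

(* Local stationarity (paper's definition), the L^2 stochastic integral
   w.r.t. the two-sided Levy process L being given abstractly as a map
   Lint : (R -> R) -> Omega_valued random variable, f |-> \int f(u) L(du). *)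
Definition locally_stationary (R : realType) (RV : Type)
  (Lint : (R -> R) -> RV) (Y : nat -> R -> RV)
  (g0 : nat -> R -> R -> R) (g : R -> R -> R) : Prop :=
  (forall (N : nat) (t : R), (0 < N)%N ->
      Y N t = Lint (fun u => g0 N (N%:R * t) (N%:R * t - u))) /\
  (forall (N : nat) (t : R), (0 < N)%N -> in_L2 (g0 N (N%:R * t))) /\
  (forall t : R, in_L2 (g t)) /\
  (forall t : R, L2dist2 (g s) (g t) @[s --> t] --> 0%E) /\
  (forall t : R, L2dist2 (g0 N (N%:R * t)) (g t) @[N --> \oo] --> 0%E).

Definition Y_OU (R : realType) (RV : Type) (Lint : (R -> R) -> RV)
  (a : R -> R) (N : nat) (t : R) : RV :=
  Lint (fun u => if u <= N%:R * t then
                   expR (- Rintegral (leb R) `[u, N%:R * t] (fun s => a (s / N%:R)))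
                 else 0).

(* g_N^0(Nt, v) = 1_{v >= 0} exp(-\int_{-v}^0 a(s/N + t) ds); written as a
   function of x = Nt, so t = x / N *)
Definition g0_OU (R : realType) (a : R -> R) (N : nat) (x v : R) : R :=
  if 0 <= v then
    expR (- Rintegral (leb R) `[- v, 0] (fun s => a (s / N%:R + x / N%:R)))
  else 0.

Definition g_OU (R : realType) (a : R -> R) (t u : R) : R :=
  if 0 <= u then expR (- (a t * u)) else 0.

(* Main.v *)
Require Import Defs.
From HB Require Import structures.
From mathcomp Require Import all_boot all_order all_algebra.
From mathcomp Require Import all_classical all_reals all_analysis.
From mathcomp Require Import ring lra measurable_realfun.
Import Order.TTheory GRing.Theory Num.Theory.
Import numFieldNormedType.Exports.
Set Implicit Arguments. Unset Strict Implicit. Unset Printing Implicit Defensive.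
Local Open Scope ring_scope.
Local Open Scope classical_set_scope.

Section Aux.
Context (R : realType).
Local Notation mu := (@lebesgue_measure R).

Definition Bf (c u : R) : R := if 0 <= u then expR (- (c * u)) else 0.

Lemma Bf_ge0 c u : 0 <= Bf c u.
Proof. rewrite /Bf; case: ifP => _ //; exact: expR_ge0. Qed.

Lemma Bf_sqr c u : Bf c u ^+ 2 = Bf (2 * c) u.
Proof.
rewrite /Bf; case: ifP => _; last by rewrite expr0n.
by rewrite expr2 -expRD; congr expR; ring.
Qed.

Lemma Bf_pdf c u : 0 < c -> Bf c u = exponential_pdf c u / c.
Proof.
move=> c0; rewrite /Bf; case: ifPn => u0.
  by rewrite exponential_pdfE // [_ * expR _]mulrC mulfK ?gt_eqF // mulNr.
by rewrite lt0_exponential_pdf ?mul0r // ltNge.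
Qed.

Lemma Bf_integrable c K : 0 < c -> mu.-integrable setT (fun u => (K * Bf c u)%:E).
Proof.
move=> c0.
have ip : mu.-integrable setT (EFin \o exponential_pdf c).
  apply/integrableP; split; first by apply/measurable_EFinP; exact: measurable_exponential_pdf.
  under eq_integral => x _.
    rewrite (@gee0_abs R (exponential_pdf c x)%:E); last by rewrite lee_fin exponential_pdf_ge0 // ltW.
    over.
  by rewrite integral_exponential_pdf // ltry.
apply: (eq_integrable measurableT _ _ _ (integrableZl measurableT (K / c) ip)) => x _ /=.
by rewrite -EFinM (Bf_pdf _ c0) mulrA mulrAC.
Qed.


Lemma Bf_sqr_le c u (x : R) : `|x| <= Bf c u -> x ^+ 2 <= Bf (2 * c) u.
Proof.
move=> h; rewrite -Bf_sqr -real_normK ?num_real // !expr2.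
by apply: ler_pM => //; exact: normr_ge0.
Qed.

Lemma Bf_sqr_le2 c u (x y : R) : `|x| <= Bf c u -> `|y| <= Bf c u ->
  (x - y) ^+ 2 <= 4 * Bf (2 * c) u.
Proof.
move=> hx hy.
have h : `|x - y| <= 2 * Bf c u.
  apply: (le_trans (ler_normB _ _)); rewrite mulr2n mulrDl mul1r.
  exact: lerD.
rewrite -real_normK ?num_real // -Bf_sqr.
have -> : 4 * Bf c u ^+ 2 = (2 * Bf c u) ^+ 2 by ring.
rewrite !expr2; apply: ler_pM => //; exact: normr_ge0.
Qed.

Lemma L2_of_bound c (f : R -> R) : 0 < c -> measurable_fun setT f ->
  (forall u, `|f u| <= Bf c u) -> in_L2 f.
Proof.
move=> c0 mf hf; split => //.
have /integrableP[mB iB] := Bf_integrable 1 (mulr_gt0 (ltr0Sn _ 1) c0).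
apply: le_lt_trans iB; apply: ge0_le_integral => //.
- by move=> x _; rewrite lee_fin sqr_ge0.
- by apply/measurable_EFinP; exact: measurable_funX.
- exact: measurableT_comp.
- move=> x _; rewrite /= ?abse_EFin lee_fin ger0_norm ?mul1r ?Bf_ge0 //.
  exact: Bf_sqr_le.
Qed.

Lemma L2dist2_fin c (f h : R -> R) : 0 < c -> measurable_fun setT f ->
  measurable_fun setT h ->
  (forall u, `|f u| <= Bf c u) -> (forall u, `|h u| <= Bf c u) ->
  L2dist2 f h \is a fin_num.
Proof.
move=> c0 mf mh hf hh.
have /integrableP[mB iB] := Bf_integrable 4 (mulr_gt0 (ltr0Sn _ 1) c0).
rewrite ge0_fin_numE; last by apply: integral_ge0 => x _; rewrite lee_fin sqr_ge0.
apply: le_lt_trans iB; apply: ge0_le_integral => //.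
- by move=> x _; rewrite lee_fin sqr_ge0.
- by apply/measurable_EFinP; apply: measurable_funX; exact: measurable_funB.
- exact: measurableT_comp.
- move=> x _; rewrite /= ?abse_EFin lee_fin ger0_norm ?mulr_ge0 ?Bf_ge0 //.
  exact: Bf_sqr_le2.
Qed.

Lemma L2_dct c (f_ : nat -> R -> R) (f : R -> R) : 0 < c ->
  (forall n, measurable_fun setT (f_ n)) -> measurable_fun setT f ->
  (forall n u, `|f_ n u| <= Bf c u) -> (forall u, `|f u| <= Bf c u) ->
  (forall u, f_ n u @[n --> \oo] --> f u) ->
  L2dist2 (f_ n) f @[n --> \oo] --> 0%E.
Proof.
move=> c0 mf_ mf hf_ hf cvf.
have m1 : forall n, measurable_fun setT (fun x => ((f_ n x - f x) ^+ 2)%:E).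
  move=> n; apply/measurable_EFinP; apply: measurable_funX; exact: measurable_funB.
have m2 : measurable_fun setT (fun _ : R => (0 : \bar R)) by [].
have h3 : {ae mu, forall x, setT x ->
    ((f_ n x - f x) ^+ 2)%:E @[n --> \oo] --> (fun _ : R => (0 : \bar R)) x}.
  apply: aeW => x _; apply/fine_cvgP; split; first by near=> n.
  rewrite /comp /=.
  have -> : (0:R) = (f x - f x) * (f x - f x) by rewrite subrr mul0r.
  under eq_fun do rewrite expr2.
  by apply: cvgM; apply: cvgB => //; exact: cvg_cst.
have h4 := Bf_integrable 4 (mulr_gt0 (ltr0Sn _ 1) c0).
have h5 : {ae mu, forall x n, setT x ->
    (`|((f_ n x - f x) ^+ 2)%:E| <= (4 * Bf (2 * c) x)%:E)%E}.
  apply: aeW => x n _; rewrite /= ?abse_EFin lee_fin ger0_norm ?sqr_ge0 //.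
  exact: Bf_sqr_le2.
have m1' : forall n, measurable_fun (setT : set (measurableTypeR R))
    (fun x : measurableTypeR R => ((f_ n x - f x) ^+ 2)%:E) by [].
have m2' : measurable_fun (setT : set (measurableTypeR R)) (fun _ => (0 : \bar R)) by [].
have [_ _] := dominated_convergence measurableT m1' m2' h3 h4 h5.
by rewrite integral0.
Unshelve. all: by end_near. Qed.


Section Spec.
Variable a : R -> R.
Hypothesis C1 : continuous a.
Hypothesis C2 : forall T : R, 0 < T -> exists2 eps : R, 0 < eps & forall s, s <= T -> eps <= a s.

Lemma lowerb (T : R) : exists2 eps : R, 0 < eps & forall s, s <= T -> eps <= a s.
Proof.
have h1 : (1:R) <= Num.max T 1 by rewrite le_max lexx orbT.
have [e e0 H] := C2 (lt_le_trans ltr01 h1).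
by exists e => // s sT; apply: H; rewrite le_max sT.
Qed.

Lemma divN_le0 (s : R) (N : nat) : s <= 0 -> s / N%:R <= 0.
Proof.
move=> s0; rewrite -oppr_ge0 -mulNr; apply: mulr_ge0.
  by rewrite oppr_ge0.
by rewrite invr_ge0 ler0n.
Qed.

Lemma gOU_bound (t T eps : R) : t <= T -> (forall s, s <= T -> eps <= a s) ->
  forall u, `|g_OU a t u| <= Bf eps u.
Proof.
move=> tT H u; rewrite /g_OU /Bf; case: ifP => u0; last by rewrite normr0.
rewrite ger0_norm ?expR_ge0 // ler_expR lerN2.
by apply: ler_wpM2r => //; apply: H.
Qed.

Lemma gOU_meas t : measurable_fun setT (g_OU a t).
Proof.
rewrite /g_OU; apply: measurable_fun_ifT.
- by apply: measurable_fun_ler.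
- apply: measurableT_comp; first exact: measurable_expR.
  by apply: measurable_funN; apply: measurable_funM.
- exact: measurable_cst.
Qed.


Lemma h_cont (N : nat) (x : R) : continuous (fun s : R => a (s / N%:R + x / N%:R)).
Proof.
move=> s; apply: continuous_comp; last exact: C1.
apply: (@cvgD _ _ _ _ _ (fun s : R => s / N%:R) (fun _ : R => x / N%:R)).
  by apply: cvgMl; exact: cvg_id.
exact: cvg_cst.
Qed.

Lemma h_int (N : nat) (x p q : R) :
  mu.-integrable `[p, q] (EFin \o (fun s => a (s / N%:R + x / N%:R))).
Proof.
apply: continuous_compact_integrable; first exact: segment_compact.
apply: continuous_subspaceT => z; exact: h_cont.
Qed.

Lemma cst_int (c p q : R) : mu.-integrable `[p, q] (EFin \o (fun _ => c)).
Proof.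
apply: continuous_compact_integrable; first exact: segment_compact.
apply: continuous_subspaceT => z; exact: cvg_cst.
Qed.

Lemma meas_itv (v : R) : 0 <= v -> fine (mu `[- v, 0]) = v.
Proof.
move=> v0; rewrite lebesgue_measure_itv /=.
rewrite le_eqVlt in v0; case/predU1P: v0 => [<-|vp].
  by rewrite oppr0 lte_fin ltxx.
by rewrite lte_fin oppr_lt0 vp /= add0r opprK.
Qed.


Lemma I_ge (N : nat) (x eps v : R) :
  (forall s, s <= 0 -> eps <= a (s / N%:R + x / N%:R)) -> 0 <= v ->
  eps * v <= \int[mu]_(s in `[- v, 0]) a (s / N%:R + x / N%:R).
Proof.
move=> H v0; rewrite -{1}(meas_itv v0) -Rintegral_cst //.
apply: le_Rintegral => //; [exact: cst_int | exact: h_int |].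
move=> s; rewrite /= in_itv /= => /andP[_ s0]; exact: H.
Qed.

Lemma g0_bound (N : nat) (x T eps : R) : x / N%:R <= T ->
  (forall s, s <= T -> eps <= a s) ->
  forall v, `|g0_OU a N x v| <= Bf eps v.
Proof.
move=> xT H v; rewrite /g0_OU /Bf; case: ifP => v0; last by rewrite normr0.
rewrite ger0_norm ?expR_ge0 // ler_expR lerN2.
apply: I_ge => // s s0; apply: H; apply: le_trans xT.
by rewrite -[leRHS](add0r (x / N%:R)) lerD2r divN_le0.
Qed.

Lemma I_mono (N : nat) (x : R) :
  (forall s, s <= 0 -> 0 <= a (s / N%:R + x / N%:R)) ->
  {homo (fun v => \int[mu]_(s in `[- v, 0]) a (s / N%:R + x / N%:R)) :
     v w / v <= w}.
Proof.
move=> H v w vw /=.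
have [v0|v0] := ltP v 0.
  rewrite set_itv_ge ?Rintegral_set0; last by rewrite bnd_simp -ltNge oppr_gt0.
  apply: Rintegral_ge0 => s; rewrite /= in_itv /= => /andP[_ s0]; exact: H.
rewrite /Rintegral fine_le //.
- by apply: integrable_fin_num => //; exact: h_int.
- by apply: integrable_fin_num => //; exact: h_int.
apply: ge0_subset_integral => //.
- by case/integrableP: (h_int N x (- w) 0).
- by move=> s; rewrite /= in_itv /= => /andP[_ s0]; rewrite lee_fin; exact: H.
- by apply: subset_itvr; rewrite bnd_simp lerN2.
Qed.

Lemma g0_meas (N : nat) (x : R) :
  (forall s, s <= 0 -> 0 <= a (s / N%:R + x / N%:R)) ->
  measurable_fun setT (g0_OU a N x).
Proof.
move=> H; rewrite /g0_OU; apply: measurable_fun_ifT.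
- by apply: measurable_fun_ler.
- apply: nonincreasing_measurable => // v w vw.
  by rewrite ler_expR lerN2; exact: I_mono.
- exact: measurable_cst.
Qed.


Lemma shift_int (N : nat) (c u : R) : u <= c ->
  \int[mu]_(s in `[u, c]) a (s / N%:R) =
  \int[mu]_(s in `[- (c - u), 0]) a (s / N%:R + c / N%:R).
Proof.
move=> uc.
have dF : (fun x : R => x + c)^`()%classic = cst 1.
  apply/funext => z; rewrite derive1E deriveD //.
  by rewrite derive_id derive_cst addr0.
have E := @integration_by_substitution_increasing R (fun x : R => x + c)
  (fun s => a (s / N%:R)) (- (c - u)) 0.
rewrite dF /= opprB subrK add0r in E.
rewrite /Rintegral E.
- rewrite opprB; congr fine; apply: eq_integral => s _.
  by change ((a ((s + c) / N%:R) * 1)%:E = (a (s / N%:R + c / N%:R))%:E); rewrite mulr1 mulrDl.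
- lra.
- by move=> x y _ _; rewrite ltrD2r.
- by move=> z _; exact: cst_continuous.
- exact: is_cvg_cst.
- exact: is_cvg_cst.
- split.
  + by move=> z _; apply: derivableD => //; exact: derivable_cst.
  + apply: cvg_at_right_filter; apply: cvgD; [exact: cvg_id | exact: cvg_cst].
  + apply: cvg_at_left_filter; apply: cvgD; [exact: cvg_id | exact: cvg_cst].
- apply: continuous_subspaceT => z; apply: continuous_comp; last exact: C1.
  by apply: cvgMl; exact: cvg_id.
Qed.


Lemma cont_int (f : R -> R) (p q : R) : continuous f ->
  mu.-integrable `[p, q] (EFin \o f).
Proof.
move=> cf; apply: continuous_compact_integrable; first exact: segment_compact.
by apply: continuous_subspaceT => z; exact: cf.
Qed.

Lemma I_cvg (t v : R) : 0 <= v ->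
  \int[mu]_(s in `[- v, 0]) a (s / N%:R + (N%:R * t) / N%:R) @[N --> \oo]
  --> a t * v.
Proof.
move=> v0; apply/cvgrPdist_le => e e0.
have e1 : 0 < e / (v + 1) by rewrite divr_gt0 // ltr_wpDl.
have Ct : a x @[x --> t] --> a t by exact: C1.
move/cvgrPdist_le: Ct => /(_ _ e1); case/nbhs_ballP => d d0 Hd.
near=> N.
have Npos : (0 < N)%N by near: N; exists 1%N.
have Nd : v / d < N%:R by near: N; exact: nbhs_infty_gtr.
have -> : N%:R * t / N%:R = t by rewrite mulrAC divff ?mul1r // pnatr_eq0 -lt0n.
have hc : continuous (fun s : R => a (s / N%:R + t)).
  move=> s; apply: continuous_comp; last exact: C1.
  apply: (@cvgD _ _ _ _ _ (fun s : R => s / N%:R) (fun _ : R => t)).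
    by apply: cvgMl; exact: cvg_id.
  exact: cvg_cst.
have hc2 : continuous (fun s : R => a t - a (s / N%:R + t)).
  move=> s; apply: (@cvgB _ _ _ _ _ (fun _ : R => a t) (fun s : R => a (s / N%:R + t))).
    exact: cvg_cst.
  exact: hc.
rewrite -{1}(meas_itv v0) -Rintegral_cst // -RintegralB //;
  [|exact: cont_int (fun _ => cvg_cst _)|exact: cont_int].
apply: (le_trans (le_normr_Rintegral _ _)) => //; first exact: cont_int.
apply: (@le_trans _ _ (\int[mu]_(s in `[- v, 0]) (e / (v + 1)))).
  apply: le_Rintegral => //.
  - apply: cont_int => s; apply: cvg_norm; exact: hc2.
  - exact: cont_int (fun _ => cvg_cst _).
  move=> s; rewrite /= in_itv /= => /andP[vs s0].
  have := Hd (s / N%:R + t); apply.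
  rewrite /ball /=.
  have -> : t - (s / N%:R + t) = - s / N%:R by ring.
  have N0 : (0:R) < N%:R by rewrite ltr0n.
  rewrite normrM normfV (ger0_norm (ltW N0)) ltr_pdivrMr //.
  rewrite ltr_pdivrMr // in Nd.
  rewrite mulrC.
  apply: (le_lt_trans _ Nd); rewrite normrN ler_norml; apply/andP; split => //.
  by apply: (le_trans s0).
rewrite Rintegral_cst // meas_itv //.
apply: (@le_trans _ _ (e / (v + 1) * (v + 1))).
  by apply: ler_wpM2l; [exact: ltW | rewrite lerDl].
by rewrite divfK // gt_eqF // ltr_wpDl.
Unshelve. all: by end_near. Qed.


Lemma g0_cvg (t v : R) :
  g0_OU a N (N%:R * t) v @[N --> \oo] --> g_OU a t v.
Proof.
rewrite /g0_OU /g_OU; case: ifP => v0; last exact: cvg_cst.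
apply: (@continuous_cvg _ _ _ _ _
  (fun N : nat => - \int[mu]_(s in `[- v, 0]) a (s / N%:R + (N%:R * t) / N%:R)) expR).
  exact: continuous_expR.
by apply: cvgN; exact: I_cvg.
Qed.

Lemma gOU_cvg (u : nat -> R) (t v : R) : u n @[n --> \oo] --> t ->
  g_OU a (u n) v @[n --> \oo] --> g_OU a t v.
Proof.
move=> ut; rewrite /g_OU; case: ifP => v0; last exact: cvg_cst.
apply: (@continuous_cvg _ _ _ _ _ (fun n => - (a (u n) * v)) expR).
  exact: continuous_expR.
apply: cvgN; apply: cvgMl.
by apply: (@continuous_cvg _ _ _ _ _ u a t) => //; exact: C1.
Qed.

Lemma Nt_div (N : nat) (t : R) : (0 < N)%N -> N%:R * t / N%:R = t.
Proof. by move=> N0; rewrite mulrAC divff ?mul1r // pnatr_eq0 -lt0n. Qed.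

Lemma hpos (N : nat) (x T eps : R) : 0 < eps -> x / N%:R <= T ->
  (forall s, s <= T -> eps <= a s) ->
  forall s, s <= 0 -> 0 <= a (s / N%:R + x / N%:R).
Proof.
move=> e0 xT H s s0; apply: (le_trans (ltW e0)); apply: H; apply: le_trans xT.
by rewrite -[leRHS](add0r (x / N%:R)) lerD2r divN_le0.
Qed.

End Spec.
End Aux.

Lemma xN_le (R : realType) (N : nat) (t : R) : N%:R * t / N%:R <= `|t|.
Proof.
case: N => [|n]; first by rewrite mul0r mul0r normr_ge0.
by rewrite Nt_div // ler_norm.
Qed.

Theorem proposition4 (R : realType) (RV : Type) (Lint : (R -> R) -> RV)
  (a : R -> R)
  (C1 : continuous a)
  (C2 : forall T : R, 0 < T -> exists2 eps : R, 0 < eps & forall s, s <= T -> eps <= a s) :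
  locally_stationary Lint (Y_OU Lint a) (g0_OU a) (g_OU a).
Proof.
split; [|split; [|split; [|split]]].
- move=> N t N0; rewrite /Y_OU; congr Lint; apply/funext => u.
  rewrite /g0_OU subr_ge0; case: ifP => // uNt.
  by rewrite (shift_int C1).
- move=> N t N0.
  have [eps e0 H] := lowerb C2 t.
  have xt : N%:R * t / N%:R <= t by rewrite Nt_div.
  apply: (L2_of_bound e0).
    exact: g0_meas (hpos e0 xt H).
  exact: g0_bound xt H.
- move=> t; have [eps e0 H] := lowerb C2 t.
  exact: (L2_of_bound e0 (gOU_meas _ _) (gOU_bound (lexx t) H)).
- move=> t; have [eps e0 H] := lowerb C2 (t + 1).
  have h1 : t < t + 1 by rewrite ltrDl.
  have Ht : t <= t + 1 by rewrite ltW.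
  apply/fine_cvgP; split.
    have : \forall s \near t, s < t + 1 by exact: lt_nbhsl.
    apply: filterS => s st.
    exact: (L2dist2_fin e0 (gOU_meas _ _) (gOU_meas _ _)
      (gOU_bound (ltW st) H) (gOU_bound Ht H)).
  apply/(@cvg_nbhsP R R^o) => u ut.
  pose w n := Num.min (u n) (t + 1).
  have wu : \forall n \near \oo, u n = w n.
    have Hu : \forall n \near \oo, u n < t + 1 := ut [set y : R | y < t + 1] (lt_nbhsl h1).
    apply: filterS Hu => n un.
    by rewrite /w min_l // ltW.
  have wt : w n @[n --> \oo] --> t by exact: cvg_trans (near_eq_cvg wu) ut.
  have wle n : w n <= t + 1 by rewrite /w ge_min lexx orbT.
  have D := L2_dct e0 (fun n => gOU_meas a (w n)) (gOU_meas a t)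
    (fun n => gOU_bound (wle n) H) (gOU_bound Ht H) (fun v => gOU_cvg C1 (v:=v) wt).
  move/fine_cvgP: D => [_ D].
  apply: (cvg_trans (near_eq_cvg _) D).
  by apply: filterS wu => n /= ->.
- move=> t; have [eps e0 H] := lowerb C2 `|t|.
  apply: (L2_dct e0).
  + move=> N; exact: g0_meas (hpos e0 (xN_le N t) H).
  + exact: gOU_meas.
  + move=> N; exact: g0_bound (xN_le N t) H.
  + exact: gOU_bound (ler_norm t) H.
  + move=> v; exact: g0_cvg C1 t v.
Qed.
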